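(* Let $n\geq 1$ and $0\leq k\leq n-1$. There is a bijection between the set of Catalan paths $P$ of order $n$ with $\mathrm{valley}(P)=k$ and the set of Catalan paths $Q$ of order $n$ with $\mathrm{enor}(Q)=k$.
   Context: A Catalan path of order $n$ is a word $P=p_1p_2\cdots p_{2n}$ in the steps $\mathbf N=(0,1)$ and $\mathbf E=(1,0)$ with $n$ of each, describing a lattice path from $(0,0)$ to $(n,n)$ that never goes below the line $y=x$. $\mathrm{valley}(P)$ is the number of indices $i$ with $p_i=\mathbf E$ and $p_{i+1}=\mathbf N$. $\mathrm{enor}(P)$ is the number of indices $i\in\{1,\dots,n\}$ with $p_{2i}=\mathbf N$. *)

(* Defs.v *)
From mathcomp Require Import all_boot.
Set Implicit Arguments. Unset Strict Implicit. Unset Printing Implicit Defensive.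

(* A step is encoded as a bool: N = (0,1) is [true], E = (1,0) is [false]. *)
Definition stepN : bool := true.
Definition stepE : bool := false.

Definition word (n : nat) := (n.*2).-tuple bool.

(* 1-indexed letter p_i of the word (i in 1..2n). *)
Definition letter (p : seq bool) (i : nat) : bool := nth stepE p i.-1.

Definition nN (s : seq bool) : nat := count (fun b => b == stepN) s.
Definition nE (s : seq bool) : nat := count (fun b => b == stepE) s.

(* Catalan path of order n: n N's and n E's, and the path from (0,0)
   never goes below y = x, i.e. every prefix has #E <= #N. *)
Definition catalan (n : nat) (p : word n) : bool :=
  [&& nN p == n, nE p == n &
      [forall i : 'I_(n.*2).+1, nE (take i p) <= nN (take i p)]].

Definition valley (n : nat) (p : word n) : nat :=
  \sum_(1 <= i < n.*2) ((letter p i == stepE) && (letter p i.+1 == stepN)).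

Definition enor (n : nat) (p : word n) : nat :=
  \sum_(1 <= i < n.+1) (letter p i.*2 == stepN).

Definition catalan_valley (n k : nat) :=
  {p : word n | catalan p && (valley p == k)}.
Definition catalan_enor (n k : nat) :=
  {p : word n | catalan p && (enor p == k)}.

(* Main.v *)
Require Import Defs.
From mathcomp Require Import all_boot.
From mathcomp Require Import zify.

Inductive tree := Lf | Nd of tree & tree.

Fixpoint flat t := match t with Lf => [::] | Nd x y => true :: flat x ++ false :: flat y end.
Fixpoint nodes t := match t with Lf => 0 | Nd x y => (nodes x + nodes y).+1 end.

Fixpoint pt fuel (s : seq bool) : tree * seq bool :=
  match fuel with
  | 0 => (Lf, s)
  | fuel'.+1 =>
    match s with
    | true :: s' =>
      let (x, r) := pt fuel' s' in
      match r with
      | false :: r' => let (y, r'') := pt fuel' r' in (Nd x y, r'')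
      | _ => (Lf, s)
      end
    | _ => (Lf, s)
    end
  end.

Lemma size_flat t : size (flat t) = (nodes t).*2.
Proof. elim: t => //= x IHx y IHy; rewrite size_cat /= IHx IHy; lia. Qed.

Lemma pt_flat t r fuel : (if r is b :: _ then ~~ b else true) ->
  size (flat t) <= fuel -> pt fuel (flat t ++ r) = (t, r).
Proof.
elim: t r fuel => [|x IHx y IHy] r fuel Hr.
  by case: fuel => [|f] //= _; case: r Hr => [|[] r].
case: fuel => [|f] //= Hs.
rewrite -catA /= IHx //; last by rewrite size_cat /= in Hs; lia.
by rewrite IHy //; rewrite size_cat /= in Hs; lia.
Qed.

Definition parse s := (pt (size s) s).1.
Lemma parse_flat t : parse (flat t) = t.
Proof. by rewrite /parse -{2}[flat t]cats0 pt_flat. Qed.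

Fixpoint chk h (s : seq bool) := match s with
  | [::] => h == 0
  | b :: s' => if b then chk h.+1 s' else (0 < h) && chk h.-1 s' end.

Lemma chk_flat t h r : chk h (flat t ++ r) = chk h r.
Proof.
elim: t h r => //= x IHx y IHy h r.
by rewrite -catA IHx /= IHy.
Qed.

Lemma ex_flat m s h : size s <= m -> chk h s -> exists t r, s = flat t ++ r /\
  (if h is h'.+1 then exists r', r = false :: r' /\ chk h' r' else r = [::]).
Proof.
elim: m s h => [|m IH] [|b s] h //=.
- by move=> _ /eqP->; exists Lf, [::].
- by move=> _ /eqP->; exists Lf, [::].
case: b => Hs.
- move=> /(IH s h.+1 Hs) [x [r1 [Es [r' [Er Hr']]]]].
  subst s r1.
  have Hsz : size r' <= m by move: Hs; rewrite size_cat /=; lia.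
  have [y [r2 [-> H2]]] := IH r' h Hsz Hr'.
  by exists (Nd x y), r2; split => //=; rewrite -catA.
- case: h => [|h] //= Hc.
  by exists Lf, (false :: s); split => //; exists s.
Qed.
Definition nz t := if t is Lf then 0 else 1.
Fixpoint vT t := match t with Lf => 0 | Nd x y => vT x + vT y + nz y end.
Definition pkT t := vT t + nz t.
Fixpoint eT t := match t with Lf => 0 | Nd x y => oT x + eT y end
with oT t := match t with Lf => 0 | Nd x y => (eT x + oT y).+1 end.
Fixpoint psi t := match t with Lf => Lf | Nd x y => Nd (psi y) (chi x) end
with chi t := match t with Lf => Lf | Nd x y => Nd (psi x) (chi y) end.
Fixpoint psi' t := match t with Lf => Lf | Nd a b => Nd (chi' b) (psi' a) end
with chi' t := match t with Lf => Lf | Nd a b => Nd (psi' a) (chi' b) end.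

Lemma stat t : vT (psi t) = eT t /\ pkT (chi t) = oT t.
Proof.
elim: t => //= x [IH1 IH2] y [IH3 IH4]; rewrite /pkT /= in IH2 IH4 *; split; lia.
Qed.
Lemma inv1 t : psi' (psi t) = t /\ chi' (chi t) = t.
Proof. by elim: t => //= x [E1 E2] y [E3 E4]; rewrite ?E1 ?E2 ?E3 ?E4. Qed.
Lemma inv2 t : psi (psi' t) = t /\ chi (chi' t) = t.
Proof. by elim: t => //= x [E1 E2] y [E3 E4]; rewrite ?E1 ?E2 ?E3 ?E4. Qed.
Lemma nodes_psi t : nodes (psi t) = nodes t /\ nodes (chi t) = nodes t.
Proof. elim: t => //= x [IH1 IH2] y [IH3 IH4]; split; lia. Qed.
Lemma nodes_psi' t : nodes (psi' t) = nodes t.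
Proof. by rewrite -{2}(proj1 (inv2 t)) (proj1 (nodes_psi _)). Qed.

Fixpoint vla prev (s : seq bool) := match s with [::] => 0 | b :: s' => (~~ prev && b) + vla b s' end.
Lemma vla_cat p s t : vla p (s ++ t) = vla p s + vla (last p s) t.
Proof. elim: s p => //= b s IH p; rewrite IH; lia. Qed.
Lemma vla_flat t : vla true (flat t) = vT t /\ vla false (flat t) = vT t + nz t.
Proof.
elim: t => //= x [IH1 IH2] y [IH3 IH4].
rewrite vla_cat /= IH1 IH4 andbF; split; lia.
Qed.

Fixpoint cp par (s : seq bool) := match s with [::] => 0 | b :: s' => (par && b) + cp (~~ par) s' end.
Lemma cp_cat par s t : cp par (s ++ t) = cp par s + cp (par (+) odd (size s)) t.
Proof.
elim: s par => //= [|b s IH] par; first by rewrite addbF.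
rewrite IH addnA; congr (_ + cp _ t); by case: par; case: (odd _).
Qed.
Lemma cp_flat t : cp false (flat t) = eT t /\ cp true (flat t) = oT t.
Proof.
elim: t => //= x [IH1 IH2] y [IH3 IH4].
rewrite !cp_cat size_flat odd_double /= IH1 IH2 IH3 IH4; split; lia.
Qed.

Lemma vla_sum prev s : vla prev s = (~~ prev && nth false s 0) +
  \sum_(0 <= j < (size s).-1) (~~ nth false s j && nth false s j.+1).
Proof.
elim: s prev => [|b s IH] prev /=; first by rewrite big_geq // andbF.
rewrite IH; apply/eqP; rewrite eqn_add2l; apply/eqP.
case: s {IH} => [|c s] /=; first by rewrite !big_geq // andbF.
by rewrite big_nat_recl.
Qed.

Lemma cp_sum s : cp false s = \sum_(0 <= j < (size s)./2) nth false s j.*2.+1 /\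
   cp true s = \sum_(0 <= j < (size s).+1./2) nth false s j.*2.
Proof.
elim: s => [|b s [IH1 IH2]] /=; first by rewrite !big_geq.
split; first by rewrite IH2.
rewrite IH1 big_nat_recl //.
Qed.

Lemma nNE s : nN s + nE s = size s.
Proof. elim: s => //= -[] s IH /=; lia. Qed.

Lemma chkP h s : chk h s <-> (h + nN s = nE s /\ forall i, nE (take i s) <= h + nN (take i s)).
Proof.
elim: s h => [|b s IH] h /=.
  split; first by move/eqP->.
  by case=> H _; apply/eqP; lia.
case: b => /=.
- rewrite IH; split; case=> H1 H2; split; try lia.
  + by case=> [|i] //=; have := H2 i; lia.
  + by move=> i; have := H2 i.+1; rewrite /=; lia.
- split.
  + case/andP=> Hh /IH [H1 H2]; split; first lia.
    by case=> [|i] //=; have := H2 i; lia.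
  + case=> H1 H2; have := H2 1; rewrite /= take0 /= => H3.
    apply/andP; split; first lia.
    apply/IH; split; first lia.
    by move=> i; have := H2 i.+1; rewrite /=; lia.
Qed.

Lemma valley_vla n (p : word n) : valley p = vla true p.
Proof.
rewrite vla_sum /= size_tuple /valley big_add1 /=.
by apply: eq_bigr => j _; rewrite /letter /=; case: (nth _ _ _); case: (nth _ _ _).
Qed.

Lemma enor_cp n (p : word n) : enor p = cp false p.
Proof.
rewrite (proj1 (cp_sum _)) size_tuple half_double /enor big_add1 /=.
by apply: eq_bigr => j _; rewrite /letter doubleS /=; case: (nth _ _ _).
Qed.

Lemma catalan_chk n (p : word n) : catalan p <-> chk 0 p.
Proof.
rewrite chkP /catalan; have := nNE p; rewrite size_tuple => Hs.
split.
- case/and3P=> /eqP H1 /eqP H2 /forallP H3; split; first lia.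
  move=> i; case: (leqP i n.*2) => Hi.
    by have := H3 (Ordinal (n := n.*2.+1) (m := i) Hi).
  rewrite take_oversize ?size_tuple; last lia.
  by have := H3 ord_max; rewrite /= take_oversize ?size_tuple.
- case=> H1 H2; apply/and3P; split; try (apply/eqP; lia).
  by apply/forallP => i.
Qed.

Lemma parse_ok n (p : word n) : catalan p -> flat (parse p) = p /\ nodes (parse p) = n.
Proof.
move/catalan_chk => Hc.
have [t [r [E Hr]]] := @ex_flat (size p) p 0 (leqnn _) Hc.
rewrite /= in Hr; subst r; rewrite cats0 in E.
rewrite E parse_flat; split => //.
have := size_flat t; rewrite -E size_tuple; lia.
Qed.

Definition Fw n (s : seq bool) : word n := insubd (nseq_tuple n.*2 false) s.

Lemma Fw_ok n t : nodes t = n -> val (Fw n (flat t)) = flat t /\ catalan (Fw n (flat t)).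
Proof.
move=> Hn.
have E : val (Fw n (flat t)) = flat t by rewrite /Fw insubdK // unfold_in size_flat Hn.
split => //; apply/catalan_chk; rewrite E -[flat t]cats0 chk_flat //.
Qed.

Definition fmap n (p : seq bool) : word n := Fw n (flat (psi' (parse p))).
Definition gmap n (p : seq bool) : word n := Fw n (flat (psi (parse p))).

Lemma f_ok n k (x : catalan_valley n k) :
  catalan (fmap n (val x)) && (enor (fmap n (val x)) == k).
Proof.
case: x => p /= /andP [Hc /eqP Hk].
have [E1 E2] := @parse_ok n p Hc.
have [E3 E4] := @Fw_ok n (psi' (parse p)) (etrans (nodes_psi' _) E2).
rewrite /fmap E4 /= enor_cp E3 (proj1 (cp_flat _)) -(proj1 (stat _)) (proj1 (inv2 _)).
by rewrite -(proj1 (vla_flat _)) E1 -valley_vla Hk.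
Qed.

Lemma g_ok n k (x : catalan_enor n k) :
  catalan (gmap n (val x)) && (valley (gmap n (val x)) == k).
Proof.
case: x => p /= /andP [Hc /eqP Hk].
have [E1 E2] := @parse_ok n p Hc.
have [E3 E4] := @Fw_ok n (psi (parse p)) (etrans (proj1 (nodes_psi _)) E2).
rewrite /gmap E4 /= valley_vla E3 (proj1 (vla_flat _)) (proj1 (stat _)).
by rewrite -(proj1 (cp_flat _)) E1 -enor_cp Hk.
Qed.

Theorem lemma4p2 (n k : nat) :
  1 <= n -> k <= n - 1 ->
  exists f : catalan_valley n k -> catalan_enor n k, bijective f.
Proof.
move=> _ _.
exists (fun x : catalan_valley n k => exist _ (fmap n (val x)) (@f_ok n k x)).
exists (fun y : catalan_enor n k => exist _ (gmap n (val y)) (@g_ok n k y)).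
- case=> p Hp; apply: val_inj; apply: val_inj => /=.
  have [Hc _] := andP Hp.
  have [E1 E2] := @parse_ok n p Hc.
  have [E3 E4] := @Fw_ok n (psi' (parse p)) (etrans (nodes_psi' _) E2).
  rewrite /gmap /fmap E3 parse_flat (proj1 (inv2 _)).
  have [E5 _] := @Fw_ok n (parse p) E2.
  by rewrite E5 E1.
- case=> p Hp; apply: val_inj; apply: val_inj => /=.
  have [Hc _] := andP Hp.
  have [E1 E2] := @parse_ok n p Hc.
  have [E3 E4] := @Fw_ok n (psi (parse p)) (etrans (proj1 (nodes_psi _)) E2).
  rewrite /gmap /fmap E3 parse_flat (proj1 (inv1 _)).
  have [E5 _] := @Fw_ok n (parse p) E2.
  by rewrite E5 E1.
Qed.
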